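(* Let $\alpha>0$. For $\theta\in[0,\pi]$ let $\lambda=\lambda(\theta;\alpha)\ge0$ satisfy $\cosh\lambda=1+\alpha-\alpha\cos\theta$, and define $$R_2(\alpha)=\frac{\alpha}{2\pi}\int_0^\pi\left(\frac{1}{\sinh\lambda}-\frac{1}{\sqrt{\alpha}\,\theta}\right)d\theta .$$ Then $$R_2(\alpha)=\frac{\sqrt{\alpha}}{4\pi}\ln\left(\frac{16}{\pi^2(\alpha+1)}\right).$$ *)

(* Defs.v *)
From Stdlib Require Import Reals.
From Coquelicot Require Export Coquelicot.
Export Reals.
Open Scope R_scope.

Definition R2_integrand (alpha : R) (lam : R -> R) (theta : R) : R :=
  / sinh (lam theta) - / (sqrt alpha * theta).

(* Main.v *)
Require Import Defs.
From Stdlib Require Import Reals Lra Psatz.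
From Coquelicot Require Import Coquelicot.
Open Scope R_scope.

Definition Fb (a t : R) : R :=
  / (2 * sin (t/2) * sqrt (1 + a * sin (t/2) ^ 2)) - / t.
Definition Kf (t : R) : R := if Req_EM_T t 0 then 1/2 else sin (t/2) / t.
Definition Gb (a t : R) : R :=
  ln (Kf t) - ln (cos (t/2) + sqrt (1 + a * sin (t/2) ^ 2)).

Lemma PI_gt3 : 3 < PI.
Proof. generalize PI2_3_2; lra. Qed.

Lemma divle n d k : 0 < d -> n <= k * d -> n / d <= k.
Proof.
  intros Hd H. replace k with ((k*d)/d) by (field; lra).
  unfold Rdiv. apply Rmult_le_compat_r; [left; apply Rinv_0_lt_compat; lra| lra].
Qed.

Lemma lediv n d k : 0 < d -> k * d <= n -> k <= n / d.
Proof.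
  intros Hd H. replace k with ((k*d)/d) by (field; lra).
  unfold Rdiv. apply Rmult_le_compat_r; [left; apply Rinv_0_lt_compat; lra| lra].
Qed.

Lemma sin_bnds x : 0 <= x <= 1 -> x - x^3/6 <= sin x <= x.
Proof.
  intros Hx.
  destruct (sin_bound x 0) as [H1 H2]; [lra| generalize PI_gt3; lra|].
  replace (sin_approx x (2 * 0 + 1)) with (x - x^3/6) in H1
    by (unfold sin_approx, sin_term; simpl; field).
  replace (sin_approx x (2 * (0 + 1))) with (x - x^3/6 + x^5/120) in H2
    by (unfold sin_approx, sin_term; simpl; field).
  split; [lra|].
  assert (0 <= x^3 * (20 - x^2)). apply Rmult_le_pos. apply pow_le; lra. nra.
  nra.
Qed.

Lemma Fb_odd a t : Fb a (-t) = - Fb a t.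
Proof.
  unfold Fb. replace (-t/2) with (-(t/2)) by field. rewrite sin_neg.
  replace (1 + a * (- sin (t/2))^2) with (1 + a * sin (t/2) ^ 2) by ring.
  replace (2 * - sin (t / 2) * sqrt (1 + a * sin (t / 2) ^ 2))
    with (- (2 * sin (t / 2) * sqrt (1 + a * sin (t / 2) ^ 2))) by ring.
  rewrite !Rinv_opp. ring.
Qed.

Lemma Fb_bound a t : 0 < a -> 0 < t <= 1 -> Rabs (Fb a t) <= (1 + a) * t.
Proof.
  intros Ha Ht. unfold Fb.
  set (x := t/2). assert (Hx : 0 < x <= 1/2) by (unfold x; lra).
  replace t with (2*x) by (unfold x; field).
  destruct (sin_bnds x) as [S1 S2]; [lra|].
  set (S := sin x) in *.
  assert (HS : x/2 <= S) by nra.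
  set (r := sqrt (1 + a * S^2)).
  assert (Hr2 : r * r = 1 + a * S^2) by (apply sqrt_sqrt; nra).
  assert (Hr0 : 0 <= r) by apply sqrt_pos.
  assert (Hr1 : 1 <= r) by nra.
  assert (E1 : / (2 * S * r) - / (2*x) = (1 - r)/(2*S*r) + (x - S)/(2*x*S))
    by (field; split; lra).
  rewrite E1.
  assert (A1 : 0 <= (x - S)/(2*x*S) <= x).
  { split. apply lediv; nra.
    apply divle; [nra|]. nra. }
  assert (A2 : - (a * S / 4) <= (1 - r)/(2*S*r) <= 0).
  { split.
    - apply lediv; [nra|].
      assert (0 <= (r-1)*(r*(r+1)-2)) by (apply Rmult_le_pos; nra).
      assert (r*r*r = r*(1+a*S^2)) by (rewrite Hr2; ring).
      nra.
    - apply divle; nra. }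
  apply Rabs_le. nra.
Qed.

Lemma cont0_of_bound f C : 0 < C ->
  (forall t, t <> 0 -> Rabs t <= 1 -> Rabs (f t - f 0) <= C * Rabs t) ->
  continuity_pt f 0.
Proof.
  intros HC H eps Heps.
  exists (Rmin 1 (eps / (2*C))). split.
  { apply Rmin_pos; [lra| apply Rdiv_lt_0_compat; lra]. }
  intros x [[_ Hx] Hd]. simpl in *. unfold R_dist in *.
  rewrite Rminus_0_r in Hd.
  assert (H1 : Rabs x <= 1) by (generalize (Rmin_l 1 (eps/(2*C))); lra).
  assert (H2 : Rabs x <= eps/(2*C)) by (generalize (Rmin_r 1 (eps/(2*C))); lra).
  specialize (H x (not_eq_sym Hx) H1).
  assert (C * Rabs x <= eps/2).
  { replace (eps/2) with (C * (eps/(2*C))) by (field; lra).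
    apply Rmult_le_compat_l; lra. }
  lra.
Qed.

Lemma Fb0 a : Fb a 0 = 0.
Proof.
  unfold Fb. replace (0/2) with 0 by field. rewrite sin_0.
  replace (2 * 0 * sqrt (1 + a * 0 ^ 2)) with 0 by ring. rewrite Rinv_0. ring.
Qed.

Lemma Fb_cont0 a : 0 < a -> continuity_pt (Fb a) 0.
Proof.
  intros Ha. apply (cont0_of_bound _ (1 + a)); [lra|].
  intros t Ht Ht1. rewrite Fb0, Rminus_0_r.
  destruct (Rlt_or_le 0 t) as [Hp|Hn].
  - rewrite (Rabs_pos_eq t) by lra. apply Fb_bound; auto.
    split; auto. generalize (Rle_abs t); lra.
  - assert (Hn' : t < 0) by lra.
    rewrite (Rabs_left t Hn').
    replace t with (- (- t)) by ring. rewrite Fb_odd, Rabs_Ropp.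
    replace (- - - t) with (-t) by ring.
    apply Fb_bound; auto. rewrite (Rabs_left t Hn') in Ht1. lra.
Qed.

Lemma Kf0 : Kf 0 = 1/2.
Proof. unfold Kf. destruct (Req_EM_T 0 0); [auto| congruence]. Qed.

Lemma Kf_nz t : t <> 0 -> Kf t = sin (t/2) / t.
Proof. intros H. unfold Kf. destruct (Req_EM_T t 0); [congruence| auto]. Qed.

Lemma Kf_bound t : 0 < t <= 1 -> Rabs (sin (t/2)/t - 1/2) <= t.
Proof.
  intros Ht. set (x := t/2). assert (Hx : 0 < x <= 1/2) by (unfold x; lra).
  replace t with (2*x) by (unfold x; field).
  destruct (sin_bnds x) as [S1 S2]; [lra|].
  replace (sin x / (2*x) - 1/2) with ((sin x - x)/(2*x)) by (field; lra).
  apply Rabs_le. split.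
  - apply lediv; nra.
  - apply divle; nra.
Qed.

Lemma Kf_cont0 : continuity_pt Kf 0.
Proof.
  apply (cont0_of_bound _ 1); [lra|].
  intros t Ht Ht1. rewrite Kf0, Kf_nz by auto. rewrite Rmult_1_l.
  destruct (Rlt_or_le 0 t) as [Hp|Hn].
  - rewrite (Rabs_pos_eq t) by lra. apply Kf_bound.
    split; auto. generalize (Rle_abs t); lra.
  - assert (Hn' : t < 0) by lra.
    rewrite (Rabs_left t Hn').
    replace (sin (t/2) / t) with (sin (-t/2) / (-t)).
    2:{ replace (-t/2) with (-(t/2)) by field. rewrite sin_neg. field. lra. }
    apply Kf_bound. rewrite (Rabs_left t Hn') in Ht1. lra.
Qed.

Lemma Qpos a s : 0 < a -> 0 < 1 + a * s^2.
Proof. intros. assert (0 <= a * s^2) by (apply Rmult_le_pos; [lra| apply pow2_ge_0]). lra. Qed.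

Lemma sin_half_pos t : 0 < t < 5 -> 0 < sin (t/2).
Proof. intros. apply sin_gt_0; generalize PI_gt3; lra. Qed.

Lemma sin_half_nz t : -1 < t < 5 -> t <> 0 -> sin (t/2) <> 0.
Proof.
  intros H Hn. destruct (Rlt_or_le 0 t).
  - generalize (sin_half_pos t); lra.
  - assert (sin (t/2) < 0) by (apply sin_lt_0_var; generalize PI_gt3; lra). lra.
Qed.

Lemma Fb_cont a t : 0 < a -> -1 < t < 5 -> continuous (Fb a) t.
Proof.
  intros Ha Ht. destruct (Req_EM_T t 0) as [->|Hn].
  - apply continuity_pt_filterlim. apply Fb_cont0; auto.
  - apply (ex_derive_continuous (K := R_AbsRing) (V := R_NormedModule)). unfold Fb. auto_derive.
    assert (Hs := sin_half_nz t Ht Hn).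
    assert (0 < 1 + a * (sin (t * / 2) * (sin (t * / 2) * 1))).
    { assert (0 <= a * (sin (t * / 2) * (sin (t * / 2) * 1))).
      apply Rmult_le_pos; [lra|]. rewrite Rmult_1_r. apply Rle_0_sqr. lra. }
    repeat split; auto.
    apply Rmult_integral_contrapositive_currified.
    apply Rmult_integral_contrapositive_currified; [lra| exact Hs].
    apply Rgt_not_eq, sqrt_lt_R0; auto.
Qed.

Lemma Gb_deriv a t : 0 < a -> 0 < t < 5 -> is_derive (Gb a) t (Fb a t).
Proof.
  intros Ha Ht.
  apply is_derive_ext_loc with
    (f := fun u => ln (sin (u/2) / u) - ln (cos (u/2) + sqrt (1 + a * sin (u/2) ^ 2))).
  { apply (locally_interval _ t 0 p_infty); simpl; auto; [lra|].
    intros y Hy _. unfold Gb. rewrite Kf_nz by lra. reflexivity. }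
  assert (Hs := sin_half_pos t Ht).
  assert (Hsc := sin2_cos2 (t/2)). unfold Rsqr in Hsc.
  unfold Fb, Rdiv in *.
  set (s := sin (t * /2)) in *. set (c := cos (t * /2)) in *.
  auto_derive.
  - fold s c. replace (1 + a * (s * (s * 1))) with (1 + a * s^2) by ring.
    assert (HQ := Qpos a s Ha).
    assert (Hr1 : 1 <= sqrt (1 + a * s^2)).
    { apply Rle_trans with (sqrt 1); [rewrite sqrt_1; lra|]. apply sqrt_le_1_alt. assert (0 <= a * s^2) by (apply Rmult_le_pos; [lra| apply pow2_ge_0]); lra. }
    repeat split; try lra.
    apply Rmult_lt_0_compat; auto. apply Rinv_0_lt_compat; lra.
    nra.
  - fold s c. replace (1 + a * (s * (s * 1))) with (1 + a * s^2) by ring.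
    set (r := sqrt (1 + a * s^2)).
    assert (HQ := Qpos a s Ha).
    assert (Hr1 : 1 <= r).
    { unfold r. apply Rle_trans with (sqrt 1); [rewrite sqrt_1; lra|]. apply sqrt_le_1_alt. assert (0 <= a * s^2) by (apply Rmult_le_pos; [lra| apply pow2_ge_0]); lra. }
    assert (Hr2 : r * r = 1 + a * s^2) by (apply sqrt_sqrt; nra).
    assert (Hcr : 0 < c + r) by nra.
    assert (K1 : c * / (2*s) - (-s/2 + a*s*c*/(2*r)) * / (c+r) - / (2*s*r)
               = (r*(s*s + c*c - 1) + c*(r*r - 1 - a*s^2)) / (2*s*r*(c+r)))
      by (field; repeat split; lra).
    rewrite Hsc, Hr2 in K1.
    replace ((r * (1 - 1) + c * (1 + a * s ^ 2 - 1 - a * s ^ 2)) / (2 * s * r * (c + r)))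
      with 0 in K1 by (field; repeat split; lra).
    assert (K2 : (1 * / 2 * c * / t + s * (- (1) * / (t * t))) * / (s * / t) +
        - ((1 * / 2 * - s + a * (1 * / 2 * c * ((1 + 1) * (s * 1))) * / (2 * r)) * / (c + r))
        = c * / (2*s) - / t - (-s/2 + a*s*c*/(2*r)) * / (c+r))
      by (field; repeat split; lra).
    rewrite K2. lra.
Qed.

Lemma Gb_cont0 a : 0 < a -> continuous (Gb a) 0.
Proof.
  intros Ha.
  apply continuous_ext with
    (f := fun t => minus (ln (Kf t)) (ln (cos (t/2) + sqrt (1 + a * sin (t/2) ^ 2)))).
  { intros t. unfold Gb, minus, plus, opp. simpl. ring. }
  apply (continuous_minus (K := R_AbsRing) (V := R_NormedModule)
    (fun t => ln (Kf t)) (fun t => ln (cos (t/2) + sqrt (1 + a * sin (t/2) ^ 2)))).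
  - apply (continuous_comp Kf ln).
    + apply continuity_pt_filterlim. apply Kf_cont0.
    + rewrite Kf0. apply (ex_derive_continuous (K := R_AbsRing) (V := R_NormedModule)).
      auto_derive. lra.
  - apply (ex_derive_continuous (K := R_AbsRing) (V := R_NormedModule)).
    auto_derive. replace (0 * /2) with 0 by field. rewrite sin_0, cos_0.
    replace (1 + a * (0 * (0 * 1))) with 1 by ring. rewrite sqrt_1. lra.
Qed.

Lemma ch_sh x : cosh x * cosh x - sinh x * sinh x = 1.
Proof.
  unfold cosh, sinh. rewrite exp_Ropp. assert (H := exp_pos x). field. lra.
Qed.

Lemma sinh_nonneg x : 0 <= x -> 0 <= sinh x.
Proof.
  intros H. destruct (Req_dec x 0) as [->|Hn]. rewrite sinh_0; lra.
  left. rewrite <- sinh_0. apply sinh_lt. lra.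
Qed.

Lemma sq_eq X Y : 0 <= X -> 0 <= Y -> X * X = Y * Y -> X = Y.
Proof.
  intros HX HY H.
  assert (E : (X - Y) * (X + Y) = 0) by (ring_simplify; lra).
  destruct (Rmult_integral _ _ E); lra.
Qed.

Lemma sinh_form a lam th : 0 < a ->
  0 <= lam /\ cosh lam = 1 + a - a * cos th -> 0 <= sin (th/2) ->
  sinh lam = 2 * sqrt a * sin (th/2) * sqrt (1 + a * sin (th/2) ^ 2).
Proof.
  intros Ha [Hl Hc] Hs.
  assert (Hcos : cos th = 1 - 2 * sin (th/2) * sin (th/2)).
  { rewrite <- cos_2a_sin. f_equal. field. }
  set (s := sin (th/2)) in *.
  assert (Hr2 : sqrt (1 + a * s^2) * sqrt (1 + a * s^2) = 1 + a * s^2)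
    by (apply sqrt_sqrt; left; apply Qpos; auto).
  assert (Ha2 : sqrt a * sqrt a = a) by (apply sqrt_sqrt; lra).
  apply sq_eq.
  - apply sinh_nonneg; auto.
  - apply Rmult_le_pos; [|apply sqrt_pos]. apply Rmult_le_pos; auto.
    apply Rmult_le_pos; [lra| apply sqrt_pos].
  - assert (E := ch_sh lam).
    replace (sinh lam * sinh lam) with (cosh lam * cosh lam - 1) by lra.
    rewrite Hc, Hcos.
    replace (2 * sqrt a * s * sqrt (1 + a * s ^ 2) *
              (2 * sqrt a * s * sqrt (1 + a * s ^ 2)))
      with (4 * (sqrt a * sqrt a) * s^2 * (sqrt (1 + a * s^2) * sqrt (1 + a * s^2))) by ring.
    rewrite Hr2, Ha2. ring.
Qed.

Theorem mainTheorem5 (alpha : R) (lam : R -> R)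
  (halpha : 0 < alpha)
  (hlam : forall theta, 0 <= theta <= PI ->
            0 <= lam theta /\ cosh (lam theta) = 1 + alpha - alpha * cos theta) :
  exists I : R,
    is_RInt (R2_integrand alpha lam) 0 PI I /\
    alpha / (2 * PI) * I = sqrt alpha / (4 * PI) * ln (16 / (PI ^ 2 * (alpha + 1))).
Proof.
  set (a := alpha) in *.
  assert (HPI := PI_gt3). assert (HPI4 := PI_4).
  assert (Hex : forall y, -1 < y < 5 -> ex_RInt (Fb a) 0 y).
  { intros y Hy. apply (ex_RInt_continuous (V := R_CompleteNormedModule)). intros z [Hz1 Hz2].
    apply Fb_cont; auto. split.
    - apply Rlt_le_trans with (Rmin 0 y); auto. apply Rmin_glb_lt; lra.
    - apply Rle_lt_trans with (Rmax 0 y); auto. apply Rmax_lub_lt; lra. }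
  set (Phi := fun y => RInt (Fb a) 0 y).
  assert (HPd : forall y, -1 < y < 5 -> is_derive Phi y (Fb a y)).
  { intros y Hy. apply (is_derive_RInt (V := R_NormedModule) (Fb a) Phi 0 y).
    - apply (locally_interval _ y (-1) 5); simpl; try lra.
      intros z Hz1 Hz2. apply (RInt_correct (V := R_CompleteNormedModule)), Hex. lra.
    - apply Fb_cont; auto. }
  set (D := fun y => Phi y - Gb a y).
  destruct (MVT_gen D 0 PI (fun _ => 0)) as [c [_ Hc]].
  { rewrite Rmin_left, Rmax_right by lra. intros x Hx.
    assert (H := is_derive_minus _ _ _ _ _ (HPd x ltac:(lra)) (Gb_deriv a x halpha ltac:(lra))).
    rewrite minus_eq_zero in H. exact H. }
  { rewrite Rmin_left, Rmax_right by lra. intros x Hx.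
    apply continuity_pt_minus.
    - apply continuity_pt_filterlim.
      apply (ex_derive_continuous (K := R_AbsRing) (V := R_NormedModule)).
      eexists. apply HPd. lra.
    - apply continuity_pt_filterlim. destruct (Req_dec x 0) as [->|Hn].
      + apply Gb_cont0; auto.
      + apply (ex_derive_continuous (K := R_AbsRing) (V := R_NormedModule)).
        eexists. apply Gb_deriv; auto. lra. }
  assert (HPhi : Phi PI = Gb a PI - Gb a 0).
  { unfold D in Hc. replace (Phi 0) with 0 in Hc by (unfold Phi; rewrite RInt_point; reflexivity).
    lra. }
  exists (/ sqrt a * (Gb a PI - Gb a 0)). split.
  - apply is_RInt_ext with (f := fun y => scal (/ sqrt a) (Fb a y)).
    + rewrite Rmin_left, Rmax_right by lra. intros x Hx.
      assert (Hs := sin_half_pos x ltac:(lra)).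
      unfold R2_integrand. rewrite (sinh_form a (lam x) x halpha (hlam x ltac:(lra))) by lra.
      unfold Fb, scal. simpl. unfold mult. simpl.
      assert (0 < sqrt a) by (apply sqrt_lt_R0; lra).
      assert (0 < sqrt (1 + a * sin (x/2) ^ 2)) by (apply sqrt_lt_R0, Qpos; auto).
      replace (sin (x/2) ^ 2) with (sin (x/2) * (sin (x/2) * 1)) in H0 by ring.
      field. repeat split; lra.
    + replace (/ sqrt a * (Gb a PI - Gb a 0)) with (scal (/ sqrt a) (Phi PI))
        by (rewrite HPhi; reflexivity).
      apply (is_RInt_scal (V := R_NormedModule)).
      apply (RInt_correct (V := R_CompleteNormedModule)), Hex. lra.
  - assert (GPI : Gb a PI = - ln PI - ln (sqrt (1 + a))).
    { unfold Gb. rewrite Kf_nz by lra. rewrite sin_PI2, cos_PI2.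
      unfold Rdiv. rewrite Rmult_1_l, ln_Rinv by lra.
      replace (0 + sqrt (1 + a * 1 ^ 2)) with (sqrt (1 + a)) by (rewrite Rplus_0_l; f_equal; ring). ring. }
    assert (G0 : Gb a 0 = - ln 2 - ln 2).
    { unfold Gb. rewrite Kf0. replace (0/2) with 0 by field. rewrite sin_0, cos_0.
      replace (1 + a * 0 ^ 2) with 1 by ring. rewrite sqrt_1.
      unfold Rdiv. rewrite Rmult_1_l, ln_Rinv by lra. replace (1+1) with 2 by ring. ring. }
    assert (Hsq : 2 * ln (sqrt (1 + a)) = ln (a + 1)).
    { assert (0 < sqrt (1 + a)) by (apply sqrt_lt_R0; lra).
      replace (a + 1) with (sqrt (1+a) * sqrt (1+a)) by (rewrite sqrt_sqrt; lra).
      rewrite ln_mult by lra. ring. }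
    assert (L16 : ln 16 = 4 * ln 2).
    { replace 16 with (2 ^ 4) by ring. rewrite ln_pow by lra. simpl. ring. }
    assert (LPI : ln (PI ^ 2) = 2 * ln PI).
    { rewrite ln_pow by lra. simpl. ring. }
    assert (HP2 : 0 < PI ^ 2) by (apply pow_lt; lra).
    rewrite ln_div by (try apply Rmult_lt_0_compat; lra).
    rewrite ln_mult by lra.
    rewrite L16, LPI, <- Hsq, GPI, G0.
    assert (Hs : 0 < sqrt a) by (apply sqrt_lt_R0; lra).
    assert (Ha2 : sqrt a * sqrt a = a) by (apply sqrt_sqrt; lra).
    replace (a / (2 * PI)) with (sqrt a * sqrt a / (2 * PI)) by (rewrite Ha2; reflexivity).
    field. lra.
Qed.
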